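(* Let $L$ be a finite-dimensional Lie algebra over a field $F$ and let \[ 0 = A_0 < A_1 < \cdots < A_n = L, \qquad 0 = B_0 < B_1 < \cdots < B_n = L \] be chief series for $L$. Then there is a bijection between the chief factors $A_i/A_{i-1}$ of the first series and the chief factors $B_j/B_{j-1}$ of the second series such that corresponding factors are isomorphic as $L$-modules and such that the Frattini chief factors in the two series correspond to each other.
   Context: A chief series is a chain of ideals of $L$ in which each successive quotient $A_i/A_{i-1}$ is a chief factor, i.e. there is no ideal of $L$ strictly between $A_{i-1}$ and $A_i$. The Frattini ideal $\phi(L)$ is the largest ideal of $L$ contained in the intersection of all maximal subalgebras. A chief factor $A/B$ is a Frattini chief factor if $A/B \subseteq \phi(L/B)$. *)

(* Defs.v *)
From HB Require Import structures.
From mathcomp Require Import all_boot all_order all_algebra all_fingroup.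
Set Implicit Arguments. Unset Strict Implicit. Unset Printing Implicit Defensive.
Import GRing.Theory.
Local Open Scope ring_scope.


Definition is_lie (F : fieldType) (L : vectType F) (br : L -> L -> L) : Prop :=
  [/\ (forall (a : F) (x y z : L), br (a *: x + y) z = a *: br x z + br y z),
      (forall (a : F) (x y z : L), br z (a *: x + y) = a *: br z x + br z y),
      (forall x : L, br x x = 0) &
      (forall x y z : L, br x (br y z) + br y (br z x) + br z (br x y) = 0)].

Definition subalgebra (F : fieldType) (L : vectType F) (br : L -> L -> L)
  (U : {vspace L}) : Prop :=
  forall x y, x \in U -> y \in U -> br x y \in U.

Definition ideal (F : fieldType) (L : vectType F) (br : L -> L -> L)
  (U : {vspace L}) : Prop :=
  forall x y, y \in U -> br x y \in U.

Definition maximal_subalgebra (F : fieldType) (L : vectType F)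
  (br : L -> L -> L) (M : {vspace L}) : Prop :=
  [/\ subalgebra br M, M != fullv &
      forall N : {vspace L}, subalgebra br N -> (M <= N)%VS ->
        N = M \/ N = fullv].

Definition chief_series (F : fieldType) (L : vectType F) (br : L -> L -> L)
  (n : nat) (A : nat -> {vspace L}) : Prop :=
  [/\ A 0%N = 0%VS, A n = fullv,
      (forall i, (i <= n)%N -> ideal br (A i)),
      (forall i, (i < n)%N -> (A i <= A i.+1)%VS /\ A i != A i.+1) &
      (forall i, (i < n)%N -> forall I : {vspace L}, ideal br I ->
          (A i <= I)%VS -> (I <= A i.+1)%VS -> I = A i \/ I = A i.+1)].

(* A/B and C/D (B <= A, D <= C ideals) are isomorphic as L-modules, where L
   acts on A/B by x.(a + B) = [x,a] + B.  Spelled out: there is a linear map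
   f (any linear map A/B -> C/D lifts to a linear map L -> L) with
   f(A) <= C, f(B) <= D, inducing a bijection A/B -> C/D which commutes
   with the L-action modulo D. *)
Definition factor_iso (F : fieldType) (L : vectType F) (br : L -> L -> L)
  (A B C D : {vspace L}) : Prop :=
  exists f : 'End(L),
    [/\ (f @: A <= C)%VS, (f @: B <= D)%VS,
        (C <= f @: A + D)%VS,
        (forall a, a \in A -> f a \in D -> a \in B) &
        (forall x a, a \in A -> f (br x a) - br x (f a) \in D)].

(* A/B is a Frattini chief factor: A/B <= phi(L/B), where phi(L/B) is the
   largest ideal of L/B contained in all maximal subalgebras of L/B.
   Via the correspondence theorem (ideals/maximal subalgebras of L/B are
   I/B, M/B with I, M ideals/maximal subalgebras of L containing B):
   A/B <= phi(L/B) iff A/B lies in some ideal I/B of L/B contained in every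
   maximal subalgebra M/B of L/B. *)
Definition frattini_factor (F : fieldType) (L : vectType F) (br : L -> L -> L)
  (A B : {vspace L}) : Prop :=
  exists I : {vspace L},
    [/\ ideal br I, (B <= I)%VS, (A <= I)%VS &
        forall M : {vspace L}, maximal_subalgebra br M -> (B <= M)%VS ->
          (I <= M)%VS].

(* Main.v *)
Require Import Defs.
From HB Require Import structures.
From mathcomp Require Import all_boot all_order all_algebra all_fingroup.
From Stdlib Require Import Classical ClassicalEpsilon Lia.
From mathcomp Require Import zify.
Set Implicit Arguments. Unset Strict Implicit. Unset Printing Implicit Defensive.

Section Lie.
Import GRing.Theory.
Local Open Scope ring_scope.
Variables (F : fieldType) (L : vectType F) (br : L -> L -> L).
Hypothesis Hlie : is_lie br.

Lemma brDlZ a x y z : br (a *: x + y) z = a *: br x z + br y z.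
Proof. by case: Hlie. Qed.
Lemma brDrZ a x y z : br z (a *: x + y) = a *: br z x + br z y.
Proof. by case: Hlie. Qed.
Lemma brxx x : br x x = 0. Proof. by case: Hlie. Qed.
Lemma jacobi x y z : br x (br y z) + br y (br z x) + br z (br x y) = 0.
Proof. by case: Hlie. Qed.

Lemma br0l z : br 0 z = 0.
Proof.
have := brDlZ 1 0 0 z; rewrite !scale1r addr0 => H.
by apply: (@addrI _ (br 0 z)); rewrite addr0 -H.
Qed.
Lemma br0r z : br z 0 = 0.
Proof.
have := brDrZ 1 0 0 z; rewrite !scale1r addr0 => H.
by apply: (@addrI _ (br z 0)); rewrite addr0 -H.
Qed.
Lemma brDl x y z : br (x + y) z = br x z + br y z.
Proof. by have := brDlZ 1 x y z; rewrite !scale1r. Qed.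
Lemma brDr x y z : br z (x + y) = br z x + br z y.
Proof. by have := brDrZ 1 x y z; rewrite !scale1r. Qed.
Lemma brZl a x z : br (a *: x) z = a *: br x z.
Proof. by have := brDlZ a x 0 z; rewrite !addr0 br0l addr0. Qed.
Lemma brZr a x z : br z (a *: x) = a *: br z x.
Proof. by have := brDrZ a x 0 z; rewrite !addr0 br0r addr0. Qed.
Lemma brNl x z : br (- x) z = - br x z.
Proof. by rewrite -scaleN1r brZl scaleN1r. Qed.
Lemma brNr x z : br z (- x) = - br z x.
Proof. by rewrite -scaleN1r brZr scaleN1r. Qed.
Lemma brBl x y z : br (x - y) z = br x z - br y z.
Proof. by rewrite brDl brNl. Qed.
Lemma brBr x y z : br z (x - y) = br z x - br z y.
Proof. by rewrite brDr brNr. Qed.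
Lemma brC x y : br x y = - br y x.
Proof.
have := brxx (x + y); rewrite brDl !brDr !brxx add0r addr0 => /eqP.
by rewrite addr_eq0 => /eqP.
Qed.
Lemma brJ x a b : br x (br a b) = br (br x a) b + br a (br x b).
Proof.
have := jacobi x a b; rewrite (brC b x) brNr (brC b (br x a)) => J.
apply/eqP; rewrite -subr_eq0 -J.
by rewrite opprD addrA addrAC.
Qed.

Lemma idealr I x y : ideal br I -> y \in I -> br y x \in I.
Proof. by move=> hI yI; rewrite brC memvN hI. Qed.
Lemma ideal_sub I : ideal br I -> subalgebra br I.
Proof. by move=> hI x y _ yI; apply: hI. Qed.
Lemma ideal0 : ideal br 0%VS.
Proof. by move=> x y; rewrite memv0 => /eqP ->; rewrite br0r mem0v. Qed.
Lemma idealf : ideal br fullv.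
Proof. by move=> x y _; rewrite memvf. Qed.
Lemma ideal_add I J : ideal br I -> ideal br J -> ideal br (I + J)%VS.
Proof.
move=> hI hJ x y /memv_addP[u uI [v vJ ->]].
by rewrite brDr memv_add // ?hI ?hJ.
Qed.
Lemma ideal_cap I J : ideal br I -> ideal br J -> ideal br (I :&: J)%VS.
Proof. by move=> hI hJ x y /memv_capP[yI yJ]; rewrite memv_cap hI ?hJ. Qed.
Lemma subalg_cap U V : subalgebra br U -> subalgebra br V -> subalgebra br (U :&: V)%VS.
Proof.
move=> hU hV x y /memv_capP[xU xV] /memv_capP[yU yV].
by rewrite memv_cap hU ?hV.
Qed.
Lemma subalg_add U I : subalgebra br U -> ideal br I -> subalgebra br (U + I)%VS.
Proof.
move=> hU hI x y /memv_addP[u uU [v vI ->]] /memv_addP[u' uU' [v' vI' ->]].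
rewrite brDl !brDr -addrA; apply: memv_add; first exact: hU.
by rewrite !rpredD //; [apply: hI | apply: idealr | apply: hI].
Qed.

Lemma dim_lt (U N : {vspace L}) : (U <= N)%VS -> N <> U -> (\dim U < \dim N)%N.
Proof.
move=> UN NU; rewrite (ltn_leqif (dimv_leqif_eq UN)).
by apply/negP => /eqP E; apply: NU.
Qed.

Lemma maximal_above (P : {vspace L} -> Prop) U : P U ->
  exists M, [/\ P M, (U <= M)%VS & forall N, P N -> (M <= N)%VS -> N = M].
Proof.
move: {2}(\dim (fullv : {vspace L}) - \dim U)%N (leqnn (\dim (fullv : {vspace L}) - \dim U)) => k.
elim: k U => [|k IH] U hk PU;
  (case: (classic (exists N, [/\ P N, (U <= N)%VS & N <> U])) => [[N [PN UN NU]] | H]).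
- have := dim_lt UN NU; have := dimvS (subvf N); move: hk; lia.
- exists U; split => // N PN UN; apply: NNPP => NU; apply: H; exists N; split => //.
- have [|M [PM NM HM]] := IH N _ PN.
    have := dim_lt UN NU; move: hk; lia.
  by exists M; split => //; apply: subv_trans NM.
- exists U; split => // N PN UN; apply: NNPP => NU; apply: H; exists N; split => //.
Qed.

Lemma vspace_pred (Q : L -> Prop) : Q 0 ->
  (forall a u v, Q u -> Q v -> Q (a *: u + v)) ->
  exists Z : {vspace L}, forall v, v \in Z <-> Q v.
Proof.
move=> Q0 QD.
have P0 : forall v, v \in (0 : {vspace L})%VS -> Q v.
  by move=> v; rewrite memv0 => /eqP ->.
have [M [PM _ HM]] := @maximal_above (fun Z : {vspace L} => forall v, v \in Z -> Q v) 0%VS P0.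
exists M => v; split; first exact: PM.
move=> Qv.
have E : (M + <[v]>)%VS = M.
  apply: HM; last exact: addvSl.
  move=> w /memv_addP[m mmM [u /vlineP[a ->] ->]].
  by rewrite addrC; apply: QD => //; apply: PM.
by rewrite -E; apply: (subvP (addvSr _ _)); rewrite memv_line.
Qed.

Lemma max_exists U : subalgebra br U -> U != fullv ->
  exists M, maximal_subalgebra br M /\ (U <= M)%VS.
Proof.
move=> sU nU.
have [M [[sM nM] UM HM]] := @maximal_above
   (fun N => subalgebra br N /\ N != fullv) U (conj sU nU).
exists M; split => //; split => // N sN MN.
case: (eqVneq N fullv) => [->|nN]; [by right | by left; apply: HM].
Qed.

Definition fr (A B : {vspace L}) :=
  forall M, maximal_subalgebra br M -> (B <= M)%VS -> (A <= M)%VS.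

Lemma frE A B : ideal br A -> ideal br B ->
  frattini_factor br A B <-> fr A B.
Proof.
move=> hA hB; split.
  move=> [I [hI BI AI HI]] M mM BM; exact: subv_trans AI (HI M mM BM).
move=> H; exists (A + B)%VS; split.
- exact: ideal_add.
- exact: addvSr.
- exact: addvSl.
by move=> M mM BM; rewrite subv_add (H M mM BM) BM.
Qed.

Lemma max_add_ideal M I : maximal_subalgebra br M -> ideal br I ->
  ~~ (I <= M)%VS -> (M + I)%VS = fullv.
Proof.
move=> [sM nM HM] hI IM.
case: (HM (M + I)%VS (subalg_add sM hI) (addvSl _ _)) => // E.
by move: IM; rewrite -E addvSr.
Qed.

Definition vsp (Q : L -> Prop) (h0 : Q 0)
  (hD : forall a u v, Q u -> Q v -> Q (a *: u + v)) : {vspace L} :=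
  proj1_sig (constructive_indefinite_description _ (vspace_pred h0 hD)).
Lemma vspP (Q : L -> Prop) h0 hD v : v \in @vsp Q h0 hD <-> Q v.
Proof. exact: (proj2_sig (constructive_indefinite_description _ (vspace_pred h0 hD)) v). Qed.

Definition chief (A B : {vspace L}) :=
  [/\ ideal br A, ideal br B, (B <= A)%VS, B != A &
      forall I, ideal br I -> (B <= I)%VS -> (I <= A)%VS -> I = B \/ I = A].

Lemma chain_up (c : nat -> {vspace L}) :
  (forall j, (c j <= c j.+1)%VS) -> (forall j, c j = c j.+1 -> c j.+1 = c j.+2) ->
  forall i, (\dim (fullv : {vspace L}) <= i)%N -> c i = c (\dim (fullv : {vspace L})).
Proof.
move=> mono step; set d := \dim (fullv : {vspace L}).
have [j [jd Ej]] : exists j, (j <= d)%N /\ c j = c j.+1.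
  apply: NNPP => H.
  have D : forall j, (j <= d.+1)%N -> (j <= \dim (c j))%N.
    elim=> [|j IHj] jd //.
    have ne: c j <> c j.+1 by move=> E; apply: H; exists j; split => //; lia.
    have := dim_lt (mono j) (fun E => ne (esym E)); have := IHj (ltnW jd); lia.
  have := D d.+1 (leqnn _); have := dimvS (subvf (c d.+1)); rewrite -/d; lia.
have St : forall m, c (j + m)%N = c (j + m)%N.+1.
  elim=> [|m IHm]; first by rewrite !addn0.
  by rewrite addnS; apply: step.
have K : forall m, c (j + m)%N = c j.
  elim=> [|m IHm]; first by rewrite !addn0.
  by rewrite addnS -(St m).
move=> i di; rewrite -(subnKC (leq_trans jd di)) -(subnKC jd) !K //.
Qed.

Lemma chain_down (c : nat -> {vspace L}) :
  (forall j, (c j.+1 <= c j)%VS) -> (forall j, c j = c j.+1 -> c j.+1 = c j.+2) ->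
  forall i, (\dim (fullv : {vspace L}) <= i)%N -> c i = c (\dim (fullv : {vspace L})).
Proof.
move=> mono step; set d := \dim (fullv : {vspace L}).
have [j [jd Ej]] : exists j, (j <= d)%N /\ c j = c j.+1.
  apply: NNPP => H.
  have D : forall j, (j <= d.+1)%N -> (\dim (c j) + j <= d)%N.
    elim=> [|j IHj] jd; first by have := dimvS (subvf (c 0%N)); rewrite -/d; lia.
    have ne: c j <> c j.+1 by move=> E; apply: H; exists j; split => //; lia.
    have := dim_lt (mono j) ne; have := IHj (ltnW jd); lia.
  have := D d.+1 (leqnn _); lia.
have St : forall m, c (j + m)%N = c (j + m)%N.+1.
  elim=> [|m IHm]; first by rewrite !addn0.
  by rewrite addnS; apply: step.
have K : forall m, c (j + m)%N = c j.
  elim=> [|m IHm]; first by rewrite !addn0.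
  by rewrite addnS -(St m).
move=> i di; rewrite -(subnKC (leq_trans jd di)) -(subnKC jd) !K //.
Qed.

Section FixY.
Variable Y : {vspace L}.
Hypothesis hY : ideal br Y.

Lemma engel n : forall S W W0 : {vspace L},
 (\dim S <= n)%N -> subalgebra br S -> (Y <= S)%VS ->
 (forall x, x \in S -> exists k, forall v, iter k (br x) v \in Y) ->
 (Y <= W0)%VS -> ~~ (W <= W0)%VS ->
 (forall x w, x \in S -> w \in W -> br x w \in W) ->
 (forall x w, x \in S -> w \in W0 -> br x w \in W0) ->
 exists2 v, v \in W & v \notin W0 /\ forall x, x \in S -> br x v \in W0.
Proof.
elim: n => [|n IH] S W W0 dS sS YS nil YW0 nW sW sW0;
  (case: (boolP (S <= Y)%VS) => [SY | nSY]).
- have [v vW vW0] := subvPn nW; exists v => //; split => // x xS.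
  by apply: (subvP YW0); apply: idealr => //; apply: (subvP SY).
- move: dS; rewrite leqn0 dimv_eq0 => /eqP S0.
  by move: nSY; rewrite S0 sub0v.
- have [v vW vW0] := subvPn nW; exists v => //; split => // x xS.
  by apply: (subvP YW0); apply: idealr => //; apply: (subvP SY).
have PY : [/\ subalgebra br Y, (Y <= Y)%VS, (Y <= S)%VS & Y != S].
  split; [exact: ideal_sub | exact: subvv | exact: YS | ].
  by apply/negP => /eqP E; move: nSY; rewrite E subvv.
have [H [[sH YH HS nHS] _ Hmax]] := @maximal_above
  (fun H => [/\ subalgebra br H, (Y <= H)%VS, (H <= S)%VS & H != S]) Y PY.
have dH : (\dim H <= n)%N.
  have := dim_lt HS (fun E => (negP nHS) (introT eqP (esym E))); lia.
have nSH : ~~ (S <= H)%VS.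
  apply/negP => SH; apply: (negP nHS); rewrite eqEsubv HS SH.
  by [].
have [v0 v0S [v0H Hv0]] := IH H S H dH sH YH
   (fun x xH => nil x (subvP HS x xH)) YH nSH
   (fun x w xH wS => sS x w (subvP HS x xH) wS)
   (fun x w xH wH => sH x w xH wH).
have SE : (H + <[v0]>)%VS = S.
  apply: NNPP => NE.
  have sH' : subalgebra br (H + <[v0]>)%VS.
    move=> a b /memv_addP[h hH [u /vlineP[k ->] ->]] /memv_addP[h' hH' [u' /vlineP[k' ->] ->]].
    apply: (subvP (addvSl _ _)).
    rewrite brDl !brDr !brZl !brZr brxx !scaler0 ?addr0.
    apply: rpredD; first apply: rpredD; first exact: sH.
      by apply: rpredZ; apply: Hv0.
    by apply: rpredZ; rewrite brC rpredN; apply: Hv0.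
  have E : (H + <[v0]>)%VS = H.
    apply: Hmax; last exact: addvSl.
    split => //.
    - exact: subv_trans YH (addvSl _ _).
    - by rewrite subv_add HS /= -memvE.
    - by apply/eqP.
  by apply: (negP v0H); rewrite -E; apply: (subvP (addvSr _ _)); rewrite memv_line.
have [w1 w1W [w1W0 Hw1]] := IH H W W0 dH sH YH
   (fun x xH => nil x (subvP HS x xH)) YW0 nW
   (fun x w xH wW => sW x w (subvP HS x xH) wW)
   (fun x w xH wW0 => sW0 x w (subvP HS x xH) wW0).
have Qit : forall j, iter j (br v0) w1 \in W /\
     forall h, h \in H -> br h (iter j (br v0) w1) \in W0.
  elim=> [|j [IWj IHj]]; first by split.
  rewrite iterS; split; first exact: sW.
  move=> h hH; rewrite brJ; apply: rpredD.
    by apply: IHj; apply: Hv0.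
  by apply: sW0 => //; apply: IHj.
have [k Hk] := nil v0 v0S.
have ex : exists k, iter k (br v0) w1 \in W0.
  by exists k; apply: (subvP YW0).
case: (ex_minnP ex) => m Hm Hmin.
have m0 : (0 < m)%N.
  case: m Hm Hmin => [|m] Hm Hmin //.
  by move: w1W0; rewrite -[w1]/(iter 0 (br v0) w1) Hm.
exists (iter m.-1 (br v0) w1); first by case: (Qit m.-1).
split.
  apply/negP => Hin; have := Hmin _ Hin; rewrite leqNgt => /negP; apply.
  by rewrite prednK.
move=> x; rewrite -SE => /memv_addP[h hH [u /vlineP[a ->] ->]].
rewrite brDl brZl rpredD ?rpredZ //; first by case: (Qit m.-1) => _; apply.
by rewrite -iterS prednK.
Qed.

Lemma iterL x j a u v :
  iter j (br x) (a *: u + v) = a *: iter j (br x) u + iter j (br x) v.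
Proof. by elim: j => [|j IHj] //=; rewrite IHj brDrZ. Qed.
Lemma iter0v x j : iter j (br x) 0 = 0.
Proof. by elim: j => [|j IHj] //=; rewrite IHj br0r. Qed.
Lemma iterDv x j u v : iter j (br x) (u + v) = iter j (br x) u + iter j (br x) v.
Proof. by rewrite -{1}[u]scale1r iterL scale1r. Qed.
Lemma iterNv x j u : iter j (br x) (- u) = - iter j (br x) u.
Proof. by rewrite -[- u]addr0 -scaleN1r iterL iter0v addr0 scaleN1r. Qed.
Lemma iterBv x j u v : iter j (br x) (u - v) = iter j (br x) u - iter j (br x) v.
Proof. by rewrite iterDv iterNv. Qed.
Lemma iterY x j y : y \in Y -> iter j (br x) y \in Y.
Proof. by move=> yY; elim: j => [|j IHj] //=; apply: hY. Qed.

Lemma leib x s : forall p q a b, (p + q)%N = s ->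
  iter p (br x) a \in Y -> iter q (br x) b \in Y -> iter s (br x) (br a b) \in Y.
Proof.
elim: s => [|s IHs] [|p] [|q] a b // E Ha Hb.
- by apply: idealr.
- by apply: iterY; apply: idealr.
- by apply: iterY; apply: hY.
- rewrite iterSr brJ iterDv; apply: rpredD.
    by apply: (IHs p q.+1) => //; [lia | rewrite -iterSr].
  by apply: (IHs p.+1 q) => //; [lia | rewrite -iterSr].
Qed.

Lemma fitting C : ideal br C -> (Y <= C)%VS -> fr C Y ->
  forall x, x \in C -> exists k, forall v, iter k (br x) v \in Y.
Proof.
move=> hC YC frC x xC.
have K0 j : iter j (br x) 0 \in Y by rewrite iter0v mem0v.
have KD j : forall a u v, iter j (br x) u \in Y -> iter j (br x) v \in Y ->
   iter j (br x) (a *: u + v) \in Y.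
  by move=> a u v Hu Hv; rewrite iterL rpredD ?rpredZ.
pose K j := vsp (K0 j) (KD j).
have KE j v : v \in K j <-> iter j (br x) v \in Y by apply: vspP.
have I0 j : exists w, exists2 y, y \in Y & (0 : L) = iter j (br x) w + y.
  by exists 0; exists 0; rewrite ?mem0v // iter0v addr0.
have ID j : forall a u v,
   (exists w, exists2 y, y \in Y & u = iter j (br x) w + y) ->
   (exists w, exists2 y, y \in Y & v = iter j (br x) w + y) ->
   (exists w, exists2 y, y \in Y & a *: u + v = iter j (br x) w + y).
  move=> a u v [w [y yY ->]] [w' [y' yY' ->]].
  exists (a *: w + w'); exists (a *: y + y'); first by rewrite rpredD ?rpredZ.
  by rewrite iterL scalerDr -!addrA; congr (_ + _); rewrite addrCA.
pose I j := vsp (I0 j) (ID j).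
have IE j v : v \in I j <-> exists w, exists2 y, y \in Y & v = iter j (br x) w + y.
  by apply: vspP.
have Kup j : (K j <= K j.+1)%VS.
  by apply/subvP => v /KE H; apply/KE; rewrite iterS; apply: hY.
have Kst j : K j = K j.+1 -> K j.+1 = K j.+2.
  move=> E; apply/eqP; rewrite eqEsubv Kup /=.
  apply/subvP => v /KE; rewrite iterSr => /KE; rewrite -{1}E => /KE.
  by rewrite -iterSr => H; apply/KE.
have Idn j : (I j.+1 <= I j)%VS.
  apply/subvP => v /IE [w [y yY ->]]; apply/IE; exists (br x w); exists y => //.
  by rewrite iterSr.
have Ist j : I j = I j.+1 -> I j.+1 = I j.+2.
  move=> E; apply/eqP; rewrite eqEsubv Idn andbT.
  apply/subvP => v /IE [w [y yY ->]].
  have : iter j (br x) w \in I j.+1 by rewrite -E; apply/IE; exists w; exists 0; rewrite ?mem0v ?addr0.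
  move=> /IE [w' [y' yY' E']].
  apply/IE; exists w'; exists (br x y' + y); first by rewrite rpredD // hY.
  by rewrite iterS E' brDr addrA.
set d := \dim (fullv : {vspace L}).
set N := d.+1.
have KN : K (N + N)%N = K N.
  by rewrite (chain_up Kup Kst (i := (N + N)%N)) ?(chain_up Kup Kst (i := N)) //; rewrite /N; lia.
have IN : I (N + N)%N = I N.
  by rewrite (chain_down Idn Ist (i := (N + N)%N)) ?(chain_down Idn Ist (i := N)) //; rewrite /N; lia.
have sK : subalgebra br (K N).
  move=> a b /KE Ha /KE Hb; rewrite -KN; apply/KE.
  exact: (leib (p := N) (q := N)).
have YK : (Y <= K N)%VS by apply/subvP => y yY; apply/KE; apply: iterY.
have allv : forall v, v \in (K N + C)%VS.
  move=> v.
  have : iter N (br x) v \in I (N + N)%N.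
    by rewrite IN; apply/IE; exists v; exists 0; rewrite ?mem0v ?addr0.
  move=> /IE [w [y yY Ew]].
  rewrite -[v](subrK (iter N (br x) w)); apply: memv_add.
    by apply/KE; rewrite iterBv Ew -iterD addrC addKr.
  by rewrite /N iterS; apply: idealr.
case: (eqVneq (K N) fullv) => [KF | nKF].
  by exists N => v; apply/KE; rewrite KF memvf.
have [M [mM KM]] := max_exists sK nKF.
have CM := frC M mM (subv_trans YK KM).
have FM : (fullv <= M)%VS.
  apply/subvP => v _; move: (allv v); apply/subvP.
  by rewrite subv_add KM CM.
by case: mM => _ nM _; move: nM; rewrite eqEsubv subvf FM.
Qed.

Lemma frat_abelian C : chief C Y -> fr C Y ->
  forall a b, a \in C -> b \in C -> br a b \in Y.
Proof.
move=> [hC _ YC nYC chC] frC.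
pose P Z := [/\ (Z <= C)%VS, (Y <= Z)%VS & forall x w, x \in C -> w \in Z -> br x w \in Y].
have PY : P Y by split => // x w _ wY; apply: hY.
have [Z [[ZC YZ HZ] _ Zmax]] := @maximal_above P Y PY.
have iZ : ideal br Z.
  move=> l z zZ.
  have PZ' : P (Z + <[br l z]>)%VS.
    split.
    - by rewrite subv_add ZC /= -memvE; apply: hC; apply: (subvP ZC).
    - exact: subv_trans YZ (addvSl _ _).
    - move=> c w cC /memv_addP[z' z'Z [u /vlineP[k ->] ->]].
      rewrite brDr brZr; apply: rpredD; first exact: HZ.
      apply: rpredZ; rewrite brJ; apply: rpredD.
        by apply: HZ => //; apply: idealr.
      by apply: hY; apply: HZ.
  have E := Zmax _ PZ' (addvSl _ _).
  by rewrite -E; apply: (subvP (addvSr _ _)); rewrite memv_line.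
case: (chC Z iZ YZ ZC) => [ZY | ZC'].
  have nil := fitting hC YC frC.
  have nCY : ~~ (C <= Y)%VS.
    by apply/negP => CY; apply: (negP nYC); rewrite eqEsubv YC CY.
  have s1 : forall x w, x \in C -> w \in C -> br x w \in C.
    by move=> x w _ wC; apply: hC.
  have s2 : forall x w, x \in C -> w \in Y -> br x w \in Y.
    by move=> x w _ wY; apply: hY.
  have [v vC [vY Hv]] := @engel (\dim C) C C Y (leqnn _) (ideal_sub hC) YC nil
    (subvv _) nCY s1 s2.
  have PV : P (Y + <[v]>)%VS.
    split.
    - by rewrite subv_add YC /= -memvE.
    - exact: addvSl.
    - move=> c w cC /memv_addP[y yY [u /vlineP[k ->] ->]].
      by rewrite brDr brZr rpredD ?rpredZ // ?Hv //; apply: hY.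
  have E := Zmax _ PV; rewrite ZY in E.
  have E' := E (addvSl _ _).
  exfalso; apply: (negP vY); rewrite -E'; apply: (subvP (addvSr _ _)); exact: memv_line.
by move=> a b aC bC; apply: HZ => //; rewrite ZC'.
Qed.
End FixY.

Lemma img_sub (f : 'End(L)) (U W : {vspace L}) : (forall u, u \in U -> f u \in W) -> (f @: U <= W)%VS.
Proof. by move=> H; apply/subvP => w /memv_imgP[u uU ->]; apply: H. Qed.

Lemma iso_refl A B : (B <= A)%VS -> factor_iso br A B A B.
Proof.
move=> BA; exists \1%VF; split; rewrite ?lim1g ?subvv ?addvSl //.
- by move=> a _; rewrite id_lfunE.
- by move=> x a _; rewrite !id_lfunE subrr mem0v.
Qed.

Lemma iso_trans A B C D E G :
  factor_iso br A B C D -> factor_iso br C D E G -> factor_iso br A B E G.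
Proof.
move=> [f [fA fB Cf injf eqf]] [g [gC gD Eg injg eqg]].
exists (g \o f)%VF; split.
- by rewrite limg_comp; apply: subv_trans (limgS _ fA) gC.
- by rewrite limg_comp; apply: subv_trans (limgS _ fB) gD.
- apply: subv_trans Eg _; rewrite limg_comp subv_add addvSr andbT.
  apply: subv_trans (limgS g Cf) _; rewrite limgD addvS //.
- move=> a aA; rewrite comp_lfunE => H; apply: injf => //; apply: injg => //.
  by apply: (subvP fA); apply: memv_img.
- move=> x a aA; rewrite !comp_lfunE.
  have -> : g (f (br x a)) - br x (g (f a)) =
     g (f (br x a) - br x (f a)) + (g (br x (f a)) - br x (g (f a))).
    by rewrite linearB /= addrA subrK.
  rewrite rpredD //.
    by apply: (subvP gD); apply: memv_img; apply: eqf.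
  by apply: eqg; apply: (subvP fA); apply: memv_img.
Qed.

Lemma iso_persp1 U V : factor_iso br V (U :&: V) (U + V) U.
Proof.
exists \1%VF; split; rewrite ?lim1g ?addvSr ?capvSl //.
- by rewrite addvC subvv.
- by move=> v vV; rewrite id_lfunE => vU; rewrite memv_cap vU vV.
- by move=> x a _; rewrite !id_lfunE subrr mem0v.
Qed.

Lemma pi_zero (U W : {vspace L}) w : (U :&: W = 0)%VS -> w \in W -> daddv_pi U W w = 0.
Proof.
move=> UW wW.
have E := daddv_pi_add UW (subvP (addvSr U W) w wW).
have E2 : daddv_pi W U w = w by apply: daddv_pi_id => //; rewrite capvC.
by move: E; rewrite E2 => E; apply: (addIr w); rewrite add0r.
Qed.

Lemma pi_rest (U W : {vspace L}) z : (U :&: W = 0)%VS -> (U + W = fullv)%VS ->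
  z - daddv_pi U W z \in W.
Proof.
move=> UW UWf.
have E := daddv_pi_add UW (_ : z \in (U + W)%VS).
rewrite -{1}(E _) ?UWf ?memvf // addrC addKr; exact: memv_pi.
Qed.

Lemma iso_persp2 U V : ideal br U -> ideal br V ->
  factor_iso br (U + V) U V (U :&: V).
Proof.
move=> hU hV.
set C := (U + V)%VS; set D := (U :&: V)%VS; set V' := (V :\: D)%VS.
set W := (U + C^C)%VS; set f := daddv_pi V' W.
have V'V : (V' <= V)%VS by apply: diffvSl.
have DU : (D <= U)%VS by apply: capvSl.
have DV : (D <= V)%VS by apply: capvSr.
have VE : (V' + D)%VS = V.
  by have E := addv_diff_cap V D; rewrite (capv_idPr DV) in E.
have WC : forall w, w \in W -> w \in C -> w \in U.
  move=> w /memv_addP[u uU [k kC ->]] wC.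
  have : k \in (C :&: C^C)%VS.
    rewrite memv_cap kC andbT -[k](addKr u) rpredD //.
    by rewrite rpredN (subvP (addvSl U V)).
  by rewrite capv_compl memv0 => /eqP ->; rewrite addr0.
have V'W : (V' :&: W = 0)%VS.
  apply/eqP; rewrite -subv0; apply/subvP => z /memv_capP[zV' zW].
  have zD : z \in D.
    rewrite memv_cap (subvP V'V) // andbT; apply: WC => //.
    by rewrite (subvP (addvSr U V)) // (subvP V'V).
  by have := capv_diff V D; move/eqP; rewrite -subv0 => /subvP; apply; rewrite memv_cap zV'.
have V'Wf : (V' + W = fullv)%VS.
  apply/eqP; rewrite eqEsubv subvf /=.
  rewrite /W addvA.
  have -> : (V' + U = C)%VS.
    apply/eqP; rewrite eqEsubv; apply/andP; split.
      by rewrite subv_add (subv_trans V'V (addvSr _ _)) addvSl.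
    by rewrite /C subv_add addvSr -VE subv_add addvSl (subv_trans DU (addvSr _ _)).
  by rewrite addv_complf.
have fid : forall v, v \in V' -> f v = v by move=> v vV; apply: daddv_pi_id.
have key : forall z, z \in C -> z - f z \in U.
  move=> z zC; apply: WC; first exact: pi_rest.
  by rewrite rpredB // (subvP (addvSr U V)) // (subvP V'V) // memv_pi.
have fV : forall z, f z \in V by move=> z; apply: (subvP V'V); apply: memv_pi.
exists f; split.
- by apply: img_sub => u _.
- apply: img_sub => u uU; rewrite pi_zero ?mem0v //.
  by rewrite (subvP (addvSl _ _)).
- apply/subvP => v; rewrite -VE => /memv_addP[v' v'V' [d dD ->]].
  apply: memv_add => //; rewrite -(fid v' v'V'); apply: memv_img.
  by rewrite (subvP (addvSr U V)) // (subvP V'V).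
- move=> c cC fcD.
  have f0 : f c = 0.
    have : f c \in (V' :&: D)%VS by rewrite memv_cap memv_pi.
    by rewrite capv_diff memv0 => /eqP.
  by have := key c cC; rewrite f0 subr0.
- move=> x c cC.
  have -> : br x c = br x (f c) + br x (c - f c) by rewrite -brDr addrC subrK.
  rewrite linearD /= (pi_zero V'W (w := br x (c - f c))); last first.
    by apply: (subvP (addvSl _ _)); apply: hU; apply: key.
  rewrite addr0.
  set z := br x (f c).
  have zV : z \in V by apply: hV.
  rewrite -opprB rpredN memv_cap key ?rpredB //.
  by rewrite (subvP (addvSr U V)).
Qed.

Lemma iso_compl M U V D : subalgebra br M -> ideal br U -> ideal br V ->
  (D <= M)%VS -> (D <= U)%VS -> (M :&: U <= D)%VS -> (M :&: V <= D)%VS ->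
  (M + U = fullv)%VS -> (M + V = fullv)%VS ->
  (forall u w, u \in U -> w \in (U + V)%VS -> br u w \in D) ->
  factor_iso br V D U D.
Proof.
move=> sM hU hV DM DU MU MV MUf MVf HUV.
set U' := (U :\: D)%VS; set f := daddv_pi U' M.
have U'U : (U' <= U)%VS by apply: diffvSl.
have UE : (U' + D)%VS = U.
  by have E := addv_diff_cap U D; rewrite (capv_idPr DU) in E.
have U'M : (U' :&: M = 0)%VS.
  apply/eqP; rewrite -subv0; apply/subvP => z /memv_capP[zU' zM].
  have zD : z \in D by apply: (subvP MU); rewrite memv_cap zM (subvP U'U).
  by have := capv_diff U D; move/eqP; rewrite -subv0 => /subvP; apply; rewrite memv_cap zU'.
have U'Mf : (U' + M = fullv)%VS.
  apply/eqP; rewrite eqEsubv subvf /= -MUf subv_add; apply/andP; split.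
    exact: addvSr.
  by rewrite -UE subv_add addvSl (subv_trans DM (addvSr _ _)).
have fid : forall v, v \in U' -> f v = v by move=> v vV; apply: daddv_pi_id.
have f0 : forall m, m \in M -> f m = 0 by move=> m mM; apply: pi_zero.
have key : forall z, z - f z \in M by move=> z; apply: pi_rest.
have fU : forall z, f z \in U by move=> z; apply: (subvP U'U); apply: memv_pi.
exists f; split.
- by apply: img_sub => v _.
- by apply: img_sub => d dD; rewrite f0 ?mem0v // (subvP DM).
- apply/subvP => u; rewrite -UE => /memv_addP[u' u'U' [d dD ->]].
  apply: memv_add => //.
  have : u' \in (M + V)%VS by rewrite MVf memvf.
  move=> /memv_addP[m mmM [v vV Eu]].
  by rewrite -(fid u' u'U') Eu linearD /= f0 // add0r memv_img.
- move=> v vV fvD.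
  have fv0 : f v = 0.
    have : f v \in (U' :&: D)%VS by rewrite memv_cap memv_pi.
    by rewrite capv_diff memv0 => /eqP.
  by apply: (subvP MV); rewrite memv_cap vV andbT -(subr0 v) -fv0.
- move=> l v vV.
  set u1 := f v; set m1 := v - f v.
  have Ev : v = u1 + m1 by rewrite /u1 /m1 addrC subrK.
  rewrite {1}Ev brDr linearD /= addrAC.
  apply: rpredD.
    have z1 : br l u1 \in U by apply: hU; apply: fU.
    rewrite -opprB rpredN; apply: (subvP MU); rewrite memv_cap key.
    by rewrite rpredB // fU.
  have : l \in (M + U)%VS by rewrite MUf memvf.
  move=> /memv_addP[m0 m0M [u0 u0U ->]].
  rewrite brDl linearD /= f0 ?add0r; last by apply: sM => //; apply: key.
  rewrite f0 ?mem0v //; apply: (subvP DM); apply: HUV => //.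
  by rewrite /m1 addvC; apply: memvB; [apply: (subvP (addvSl V U)) | apply: (subvP (addvSr V U))].
Qed.

Lemma persp_fr X Y : fr X (X :&: Y) -> fr (X + Y) Y.
Proof.
move=> H M mM YM; rewrite subv_add YM andbT.
by apply: H => //; apply: subv_trans (capvSr _ _) YM.
Qed.

Lemma ideal_inter_max M I J : subalgebra br M -> ideal br I -> ideal br J ->
  (M + J = fullv)%VS -> (forall j i, j \in J -> i \in I -> br j i \in M) ->
  ideal br (M :&: I)%VS.
Proof.
move=> sM hI hJ MJ HJI l z /memv_capP[zM zI].
have : l \in (M + J)%VS by rewrite MJ memvf.
move=> /memv_addP[m0 m0M [j0 j0J ->]].
rewrite brDl memv_cap; apply/andP; split.
  by apply: rpredD; [apply: sM | apply: HJI].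
by apply: rpredD; apply: hI.
Qed.

Lemma exchange X Y : ideal br X -> ideal br Y ->
  chief (X + Y) X -> chief (X + Y) Y -> chief X (X :&: Y) -> chief Y (X :&: Y) ->
  fr (X + Y) Y -> ~ fr X (X :&: Y) ->
  [/\ ~ fr Y (X :&: Y), fr (X + Y) X, factor_iso br X (X :&: Y) Y (X :&: Y)
    & factor_iso br Y (X :&: Y) X (X :&: Y)].
Proof.
move=> hX hY chCX chCY chXD chYD frCY nfrXD.
set C := (X + Y)%VS; set D := (X :&: Y)%VS.
have hC : ideal br C by apply: ideal_add.
have [M [mM DM XM]] : exists M, [/\ maximal_subalgebra br M, (D <= M)%VS & ~~ (X <= M)%VS].
  apply: NNPP => H; apply: nfrXD => M mM DM; apply: NNPP => nX; apply: H.
  by exists M; split => //; apply/negP.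
have sM : subalgebra br M by case: mM.
have YM : ~~ (Y <= M)%VS.
  apply/negP => YM; apply: (negP XM); apply: subv_trans (addvSl X Y) _.
  exact: frCY.
have MX := max_add_ideal mM hX XM.
have MY := max_add_ideal mM hY YM.
have hab := frat_abelian hY chCY frCY.
have XC : (X <= C)%VS by apply: addvSl.
have YC : (Y <= C)%VS by apply: addvSr.
have XX : forall a b, a \in X -> b \in X -> br a b \in D.
  by move=> a b aX bX; rewrite memv_cap hX // hab // (subvP XC).
have XY : forall a b, a \in X -> b \in Y -> br a b \in D.
  by move=> a b aX bY; rewrite memv_cap hY // idealr.
have YX : forall a b, a \in Y -> b \in X -> br a b \in D.
  by move=> a b aY bX; rewrite memv_cap hX // idealr.
have MXD : (M :&: X)%VS = D.
  have iMX : ideal br (M :&: X)%VS.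
    apply: (ideal_inter_max sM hX hY MY) => j i jJ iI.
    by apply: (subvP DM); apply: YX.
  have DMX : (D <= M :&: X)%VS by rewrite subv_cap DM capvSl.
  case: chXD => _ _ _ _ H; case: (H _ iMX DMX (capvSr _ _)) => // E.
  by move: XM; rewrite -E capvSl.
have MYD : (M :&: Y)%VS = D.
  have iMY : ideal br (M :&: Y)%VS.
    apply: (ideal_inter_max sM hY hX MX) => j i jJ iI.
    by apply: (subvP DM); apply: XY.
  have DMY : (D <= M :&: Y)%VS by rewrite subv_cap DM capvSr.
  case: chYD => _ _ _ _ H; case: (H _ iMY DMY (capvSr _ _)) => // E.
  by move: YM; rewrite -E capvSl.
have YY : forall a b, a \in Y -> b \in Y -> br a b \in D.
  move=> a b aY bY; rewrite -MYD memv_cap hY // andbT.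
  have : a \in (M + X)%VS by rewrite MX memvf.
  move=> /memv_addP[m mmM [x xX Ea]].
  have : b \in (M + X)%VS by rewrite MX memvf.
  move=> /memv_addP[m' mmM' [x' xX' Eb]].
  rewrite Ea brDl; apply: rpredD; last by apply: (subvP DM); apply: XY.
  rewrite Eb brDr; apply: rpredD; first exact: sM.
  have -> : m = a - x by rewrite Ea addrK.
  by rewrite brBl; apply: rpredB; apply: (subvP DM); [apply: YX | apply: XX].
have CC : forall a b, a \in C -> b \in C -> br a b \in D.
  move=> a b /memv_addP[x xX [y yY ->]] /memv_addP[x' xX' [y' yY' ->]].
  by rewrite brDl !brDr; apply: rpredD; apply: rpredD; [apply: XX | apply: XY | apply: YX | apply: YY].
have iso1 : factor_iso br Y D X D.
  apply: (iso_compl sM hX hY DM (capvSl _ _)); rewrite ?MXD ?MYD //.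
  by move=> u w uX wC; apply: CC => //; apply: (subvP XC).
have iso2 : factor_iso br X D Y D.
  apply: (iso_compl sM hY hX DM (capvSr _ _)); rewrite ?MXD ?MYD //.
  by move=> u w uY wC; apply: CC; [apply: (subvP YC) | rewrite /C addvC].
split => //.
  by move=> H; apply: (negP YM); apply: H.
move=> M' mM' XM'; apply: NNPP => /negP nCM'.
have sM' : subalgebra br M' by case: mM'.
have M'C := max_add_ideal mM' hC nCM'.
have M'CX : (M' :&: C)%VS = X.
  have iM'C : ideal br (M' :&: C)%VS.
    apply: (ideal_inter_max sM' hC hC M'C) => j i jJ iI.
    by apply: (subvP XM'); apply: (subvP (capvSl X Y)); apply: CC.
  have : (X <= M' :&: C)%VS by rewrite subv_cap XM' XC.
  case: chCX => _ _ _ _ H => XMC; case: (H _ iM'C XMC (capvSr _ _)) => // E.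
  by move: nCM'; rewrite /C -E capvSl.
have nYM' : ~~ (Y <= M')%VS.
  by apply/negP => YM'; apply: (negP nCM'); rewrite subv_add XM'.
have M'Y := max_add_ideal mM' hY nYM'.
set U := ((M :&: M') + Y)%VS.
have sU : subalgebra br U by apply: subalg_add => //; apply: subalg_cap.
have UX : (U + X)%VS = fullv.
  apply/eqP; rewrite eqEsubv subvf /=; apply/subvP => v _.
  have : v \in (M' + Y)%VS by rewrite M'Y memvf.
  move=> /memv_addP[m' m'M' [y yY ->]].
  have : m' \in (M + X)%VS by rewrite MX memvf.
  move=> /memv_addP[m mmM [x xX Em]].
  have mmM' : m \in M' by rewrite -[m](addrK x) -Em rpredB // (subvP XM').
  rewrite Em -addrA (addrC x) addrA; apply: memv_add => //.
  by apply: memv_add => //; rewrite memv_cap mmM.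
have UXD : forall w, w \in U -> w \in X -> w \in D.
  move=> w /memv_addP[a /memv_capP[aM aM'] [y yY Ew]] wX.
  have yD : y \in D.
    have : y \in (M' :&: C)%VS.
      rewrite memv_cap (subvP YC) // andbT.
      by rewrite -[y](addKr a) -Ew rpredD ?rpredN // (subvP XM').
    by rewrite M'CX => yX; rewrite memv_cap yX.
  by rewrite -MXD memv_cap wX andbT Ew rpredD // (subvP DM).
have nU : U != fullv.
  apply/negP => /eqP UF.
  case: chXD => _ _ _ nDX _; apply: (negP nDX); rewrite eqEsubv capvSl /=.
  by apply/subvP => x xX; apply: UXD => //; rewrite UF memvf.
have [M'' [mM'' UM'']] := max_exists sU nU.
have YM'' : (Y <= M'')%VS by apply: subv_trans (addvSr _ _) UM''.
have CM'' := frCY M'' mM'' YM''.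
case: mM'' => _ nM'' _; apply: (negP nM''); rewrite eqEsubv subvf /= -UX subv_add UM''.
exact: subv_trans XC CM''.
Qed.

Definition R (p q : {vspace L} * {vspace L}) :=
  [/\ factor_iso br p.1 p.2 q.1 q.2, factor_iso br q.1 q.2 p.1 p.2
    & (fr p.1 p.2 <-> fr q.1 q.2)].

Lemma R_refl p : (p.2 <= p.1)%VS -> R p p.
Proof. by move=> H; split; [apply: iso_refl | apply: iso_refl | ]. Qed.
Lemma R_sym p q : R p q -> R q p.
Proof. by case=> h1 h2 h3; split => //; apply: iff_sym. Qed.
Lemma R_trans p q r : R p q -> R q r -> R p r.
Proof.
case=> h1 h2 h3 [h4 h5 h6]; split; first exact: iso_trans h1 h4.
  exact: iso_trans h5 h2.
exact: iff_trans h3 h6.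
Qed.

Lemma local_match X Y : ideal br X -> ideal br Y ->
  chief (X + Y) X -> chief (X + Y) Y -> chief X (X :&: Y) -> chief Y (X :&: Y) ->
  (R (X, X :&: Y) (Y, X :&: Y) /\ R (X + Y, X) (X + Y, Y))%VS \/
  (R (X, X :&: Y) (X + Y, Y) /\ R (X + Y, X) (Y, X :&: Y))%VS.
Proof.
move=> hX hY chCX chCY chXD chYD.
have pA : factor_iso br X (X :&: Y) (X + Y) Y.
  by have := iso_persp1 Y X; rewrite capvC addvC.
have pB : factor_iso br (X + Y) Y X (X :&: Y).
  by have := iso_persp2 hY hX; rewrite addvC capvC.
have pC : factor_iso br Y (X :&: Y) (X + Y) X by apply: iso_persp1.
have pD : factor_iso br (X + Y) X Y (X :&: Y) by apply: iso_persp2.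
have left_case : factor_iso br Y (X :&: Y) X (X :&: Y) ->
                 factor_iso br X (X :&: Y) Y (X :&: Y) ->
                 (fr X (X :&: Y) <-> fr Y (X :&: Y)) ->
                 (fr (X + Y) X <-> fr (X + Y) Y) ->
  (R (X, X :&: Y) (Y, X :&: Y) /\ R (X + Y, X) (X + Y, Y))%VS.
  move=> i1 i2 f1 f2; split; split => //=.
  - exact: iso_trans pD (iso_trans i1 pA).
  - exact: iso_trans pB (iso_trans i2 pC).
case: (classic (fr (X + Y) Y /\ ~ fr X (X :&: Y))) => [[frCY nfrXD] | nA].
  have [nfrYD frCX i2 i1] := exchange hX hY chCX chCY chXD chYD frCY nfrXD.
  by left; apply: left_case.
case: (classic (fr (X + Y) X /\ ~ fr Y (X :&: Y))) => [[frCX nfrYD] | nB].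
  have chCX' : chief (Y + X) Y by rewrite addvC.
  have chCY' : chief (Y + X) X by rewrite addvC.
  have chXD' : chief Y (Y :&: X) by rewrite capvC.
  have chYD' : chief X (Y :&: X) by rewrite capvC.
  have frCX' : fr (Y + X) X by rewrite addvC.
  have nfrYD' : ~ fr Y (Y :&: X) by rewrite capvC.
  have [nfrXD frCY i1 i2] := exchange hY hX chCX' chCY' chXD' chYD' frCX' nfrYD'.
  rewrite addvC capvC in frCY i1 i2; rewrite capvC in nfrXD.
  by left; apply: left_case.
right; split; split => //=.
- split; first exact: persp_fr.
  by move=> H; apply: NNPP => nH; apply: nA.
- split.
    by move=> H; apply: NNPP => nH; apply: nB.
  by move=> H; rewrite capvC in H; have := persp_fr H; rewrite addvC.
Qed.

Definition mt n (f g : nat -> {vspace L} * {vspace L}) :=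
  exists s : {perm 'I_n}, forall i : 'I_n, R (f i) (g (s i)).

Lemma mt_sym n f g : mt n f g -> mt n g f.
Proof.
move=> [s Hs]; exists s^-1%g => i; apply: R_sym.
by have := Hs (s^-1 i)%g; rewrite permKV.
Qed.

Lemma mt_trans n f g h : mt n f g -> mt n g h -> mt n f h.
Proof.
move=> [s Hs] [t Ht]; exists (s * t)%g => i.
by rewrite permM; apply: R_trans (Hs i) (Ht (s i)).
Qed.

Lemma mt_ext n f g f' g' : (forall i, (i < n)%N -> f i = f' i) ->
  (forall i, (i < n)%N -> g i = g' i) -> mt n f g -> mt n f' g'.
Proof.
move=> Ef Eg [s Hs]; exists s => i.
by rewrite -Ef ?ltn_ord // -Eg ?ltn_ord.
Qed.

Lemma mt_id n f g : (forall i, (i < n)%N -> R (f i) (g i)) -> mt n f g.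
Proof. by move=> H; exists 1%g => i; rewrite perm1; apply: H. Qed.

Lemma mt_snoc n f g : mt n f g -> R (f n) (g n) -> mt n.+1 f g.
Proof.
move=> [s Hs] Hn; exists (lift_perm ord_max ord_max s) => i.
case: (unliftP ord_max i) => [j ->|->].
  by rewrite lift_perm_lift !lift_max.
by rewrite lift_perm_id.
Qed.

Lemma mt_swap n f g : (forall i, (i < n)%N -> R (f i) (g i)) ->
  R (f n) (g n.+1) -> R (f n.+1) (g n) -> mt n.+2 f g.
Proof.
move=> H H1 H2.
exists (tperm (inord n : 'I_n.+2) (inord n.+1)) => i.
case: (tpermP (inord n : 'I_n.+2) (inord n.+1) i) => [->|->|ni nsi].
- by rewrite !inordK.
- by rewrite !inordK.
apply: H.
have : (i : nat) != n by apply/eqP => E; apply: ni; apply/val_inj; rewrite /= inordK // E.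
have : (i : nat) != n.+1 by apply/eqP => E; apply: nsi; apply/val_inj; rewrite /= inordK // E.
by have := ltn_ord i; lia.
Qed.

Definition cs n (A : nat -> {vspace L}) C :=
  [/\ A 0%N = 0%VS, A n = C & forall i, (i < n)%N -> chief (A i.+1) (A i)].

Definition fac (A : nat -> {vspace L}) (i : nat) := (A i.+1, A i).

Lemma cs_sub n A C : cs n A C -> forall i, (i <= n)%N -> (A i <= C)%VS.
Proof.
move=> [A0 An H] i; move: {2}(n - i)%N (erefl (n - i)%N) => d.
elim: d i => [|d IHd] i E lin.
  have -> : i = n by lia.
  by rewrite An.
have E' : (n - i.+1)%N = d by lia.
have l' : (i < n)%N by lia.
apply: subv_trans (IHd i.+1 E' l').
by case: (H i l').
Qed.

Lemma chief_sum C X Y : chief C X -> chief C Y -> X != Y -> (X + Y)%VS = C.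
Proof.
move=> [hC hX XC nXC HX] [_ hY YC nYC HY] nXY.
case: (HX (X + Y)%VS (ideal_add hX hY) (addvSl _ _)); rewrite ?subv_add ?XC ?YC //.
move=> E; have YX : (Y <= X)%VS by rewrite -E addvSr.
case: (HY X hX YX XC) => E'.
  by move: nXY; rewrite E' eqxx.
by move: nXC; rewrite E' eqxx.
Qed.

Lemma chief_cap C X Y : chief C X -> chief C Y -> X != Y -> chief X (X :&: Y).
Proof.
move=> chX chY nXY; have CE := chief_sum chX chY nXY.
case: chX => [hC hX XC nXC HX]; case: chY => [_ hY YC nYC HY].
split => //; first exact: ideal_cap.
- exact: capvSl.
- apply/negP => /eqP E.
  have XY : (X <= Y)%VS by rewrite -E capvSr.
  case: (HX Y hY XY YC) => E'.
    by move: nXY; rewrite E' eqxx.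
  by move: nYC; rewrite E' eqxx.
move=> I hI DI IX.
case: (HY (I + Y)%VS (ideal_add hI hY) (addvSr _ _)).
- by rewrite subv_add YC (subv_trans IX XC).
- move=> E; left; apply/eqP; rewrite eqEsubv DI andbT subv_cap IX /=.
  by rewrite -E addvSl.
move=> E; right; apply/eqP; rewrite eqEsubv IX /=; apply/subvP => x xX.
have : x \in (I + Y)%VS by rewrite E -CE (subvP (addvSl _ _)).
move=> /memv_addP[i iI [y yY Ex]].
have yD : y \in (X :&: Y)%VS.
  by rewrite memv_cap yY andbT -[y](addKr i) -Ex rpredD ?rpredN // (subvP IX).
by rewrite Ex rpredD // (subvP DI).
Qed.

Lemma cs_exists D : ideal br D -> exists k S, cs k S D.
Proof.
move: {2}(\dim D) (leqnn (\dim D)) => d.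
elim: d D => [|d IHd] D dD hD.
  move: dD; rewrite leqn0 dimv_eq0 => /eqP ->.
  by exists 0%N, (fun _ => 0%VS); split.
case: (eqVneq D 0%VS) => [->|nD].
  by exists 0%N, (fun _ => 0%VS); split.
have P0 : [/\ ideal br 0%VS, (0 <= D)%VS & 0%VS != D].
  by split; [exact: ideal0 | exact: sub0v | rewrite eq_sym].
have [J [[hJ JD nJD] _ Jmax]] := @maximal_above
   (fun I => [/\ ideal br I, (I <= D)%VS & I != D]) 0%VS P0.
have chDJ : chief D J.
  split => // I hI JI ID.
  case: (eqVneq I D) => [->|nID]; [by right | left].
  by apply: Jmax.
have dJ : (\dim J <= d)%N.
  have := dim_lt JD (fun E => (negP nJD) (introT eqP (esym E))); lia.
have [k [S [S0 Sk HS]]] := IHd J dJ hJ.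
exists k.+1, (fun i => if (i <= k)%N then S i else D); split => //=.
  by rewrite ltnn.
move=> i ik; case: (leqP i.+1 k) => ik'.
  by rewrite /= (ltnW ik'); apply: HS.
have -> : i = k by lia.
by rewrite /= leqnn Sk.
Qed.

Theorem JH n : forall C m A B, cs n A C -> cs m B C -> n = m /\ mt n (fac A) (fac B).
Proof.
elim: n => [|n IH] C [|m] A B csA csB.
- by split => //; exists 1%g => -[].
- exfalso; case: csA => A0 An _; case: csB => B0 Bm HB.
  have B1 : (B 1%N <= C)%VS by apply: (cs_sub (And3 B0 Bm HB)).
  move: B1; rewrite -An A0 subv0 => /eqP B10.
  by case: (HB 0%N (ltn0Sn _)) => _ _ _; rewrite B10 B0 eqxx.
- exfalso; case: csB => B0 Bm _; case: csA => A0 An HA.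
  have A1 : (A 1%N <= C)%VS by apply: (cs_sub (And3 A0 An HA)).
  move: A1; rewrite -Bm B0 subv0 => /eqP A10.
  by case: (HA 0%N (ltn0Sn _)) => _ _ _; rewrite A10 A0 eqxx.
case: csA => A0 An HA; case: csB => B0 Bm HB.
set X := A n; set Y := B m.
have chX : chief C X by rewrite -An; apply: HA.
have chY : chief C Y by rewrite -Bm; apply: HB.
have csAX : cs n A X by split => // i lt; apply: HA; lia.
have csBY : cs m B Y by split => // i lt; apply: HB; lia.
have hX : ideal br X by case: chX.
have hY : ideal br Y by case: chY.
case: (eqVneq X Y) => [EXY | nXY].
  have csBX : cs m B X by rewrite EXY.
  have [Enm Hmt] := IH X m A B csAX csBX.
  subst m; split => //.
  apply: mt_snoc => //; rewrite /fac An Bm -/X -/Y EXY; apply: R_refl.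
  by case: chY.
set D := (X :&: Y)%VS.
have CE := chief_sum chX chY nXY.
have chXD : chief X D := chief_cap chX chY nXY.
have chYD : chief Y D.
  by rewrite /D capvC; apply: (chief_cap chY chX); rewrite eq_sym.
have hD : ideal br D by case: chXD.
have [k [S [S0 Sk HS]]] := cs_exists hD.
pose T (Z : {vspace L}) := fun i => if (i <= k)%N then S i else if i == k.+1 then Z else C.
have csT : forall Z, chief Z D -> cs k.+1 (T Z) Z.
  move=> Z chZ; split; first by rewrite /T leq0n.
    by rewrite /T ltnn eqxx.
  move=> i ik; rewrite /T; case: (leqP i.+1 k) => ik'.
    by rewrite /= (ltnW ik'); apply: HS.
  have -> : i = k by lia.
  by rewrite /= eqxx leqnn Sk.
have [Enk mAX] := IH X k.+1 A (T X) csAX (csT X chXD).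
have csTY : cs n (T Y) Y by rewrite Enk; apply: csT.
have [Enm mYB] := IH Y m (T Y) B csTY csBY.
split; first by rewrite Enm.
subst n m.
have hT1 : forall Z i, (i < k)%N -> fac (T Z) i = (S i.+1, S i).
  by move=> Z i ik; rewrite /fac /T ik (ltnW ik).
have hT2 : forall Z, fac (T Z) k = (Z, D).
  by move=> Z; rewrite /fac /T ltnn eqxx leqnn Sk.
have hT3 : forall Z, fac (T Z) k.+1 = (C, Z).
  move=> Z; rewrite /fac /T.
  have -> : (k.+2 <= k)%N = false by lia.
  have -> : (k.+2 == k.+1) = false by lia.
  by rewrite ltnn eqxx.
have Srefl : forall i, (i < k)%N -> R (S i.+1, S i) (S i.+1, S i).
  by move=> i ik; apply: R_refl; case: (HS i ik).
have mA : mt k.+2 (fac A) (fac (T X)).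
  apply: mt_snoc => //; rewrite hT3 /fac An -/X; apply: R_refl.
  by case: chX.
have mB : mt k.+2 (fac (T Y)) (fac B).
  apply: mt_snoc => //; rewrite hT3 /fac Bm -/Y; apply: R_refl.
  by case: chY.
have chCX' : chief (X + Y) X by rewrite CE.
have chCY' : chief (X + Y) Y by rewrite CE.
have mM : mt k.+2 (fac (T X)) (fac (T Y)).
  case: (local_match hX hY chCX' chCY' chXD chYD) => [[R1 R2]|[R1 R2]].
    apply: mt_id => i ik.
    case: (ltngtP i k) => [ilt|igt|->].
    - by rewrite !hT1 //; apply: Srefl.
    - have -> : i = k.+1 by lia.
      by rewrite !hT3 -CE.
    - by rewrite !hT2.
  apply: mt_swap.
  - by move=> i ik; rewrite !hT1 //; apply: Srefl.
  - by rewrite hT2 hT3 -CE.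
  - by rewrite hT2 hT3 -CE.
exact: mt_trans (mt_trans mA mM) mB.
Qed.

End Lie.

Unset Implicit Arguments.
Set Strict Implicit.

Theorem theorem2p4 (F : fieldType) (L : vectType F) (br : L -> L -> L)
  (n : nat) (A B : nat -> {vspace L}) :
  is_lie br -> chief_series br n A -> chief_series br n B ->
  exists sigma : {perm 'I_n},
    forall i : 'I_n,
      factor_iso br (A i.+1) (A i) (B (sigma i).+1) (B (sigma i)) /\
      (frattini_factor br (A i.+1) (A i) <->
       frattini_factor br (B (sigma i).+1) (B (sigma i))).
Proof.
move=> Hlie csA csB.
have cs' : forall A, chief_series br n A -> cs br n A fullv.
  move=> A' [A0 An Hid Hmono Hch]; split => // i lt.
  have [h1 h2] := Hmono i lt.
  split => //; [apply: Hid; exact: lt | apply: Hid; exact: ltnW | exact: Hch].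
have [_ [s Hs]] := @JH F L br Hlie n fullv n A B (cs' A csA) (cs' B csB).
exists s => i; case: (Hs i) => h1 h2 h3; split => //.
case: csA => _ _ HA _ _; case: csB => _ _ HB _ _.
rewrite !frE //; try (apply: HA || apply: HB); try exact: ltn_ord; try exact: ltnW (ltn_ord _).
Qed.
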